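(* Let $\gamma>1$. Among functions $\chi(\pi)=\dfrac{\pi^2+c_1\pi+c_2}{c_3\pi+c_4}$ ($c_3\neq0$) satisfying $\chi(0)=0$, $\chi(1/3)=1/3$, $\chi'(0)=\gamma$, $\chi'(1/3)=1/2$, one has $$\chi(\pi)=\frac{\pi[\gamma+3\pi(\gamma-2)]}{1+3\pi(2\gamma-3)}.$$ For this $\chi$, the compressibility inequalities $0<\chi<1$, $\zeta(\pi)>0$, $\eta(\pi)>0$ hold for all $\pi\in(0,1/3)$; the function $e$ with $e'/e=\pi/((\chi-\pi)(\pi+1))$, $e(0)=1$, is $$e(\pi)=\frac{(1+\pi)^{\frac{5-3\gamma}{2(\gamma-1)}}}{\sqrt{1-3\pi}},\qquad\text{so } e^2(\pi)(1-3\pi)=(1+\pi)^{\frac{5-3\gamma}{\gamma-1}};$$ and the Taub inequality $e^2(\pi)(1-3\pi)\ge1$ holds for all $\pi\in(0,1/3)$ if and only if $1<\gamma\le5/3$.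
   Context: $\zeta(\pi)\equiv(1+\pi)(\chi-\pi)\chi'+2\chi(1-\chi)$, $\eta(\pi)\equiv(2\pi+1)\chi-\pi$. The variable $\pi=p/\rho\in(0,1/3)$, $\chi$ is the squared speed of sound of a generic ideal gas, $e=\rho/n$ its specific energy. *)

(* Defs.v *)
From Stdlib Require Import Reals.
From Coquelicot Require Export Coquelicot.
Open Scope R_scope.

Definition chi_gen (c1 c2 c3 c4 : R) (p : R) : R :=
  (p ^ 2 + c1 * p + c2) / (c3 * p + c4).

Definition chi (g : R) (p : R) : R :=
  p * (g + 3 * p * (g - 2)) / (1 + 3 * p * (2 * g - 3)).

Definition zeta (ch : R -> R) (p : R) : R :=
  (1 + p) * (ch p - p) * Derive ch p + 2 * ch p * (1 - ch p).

Definition eta (ch : R -> R) (p : R) : R :=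
  (2 * p + 1) * ch p - p.

Definition e_formula (g : R) (p : R) : R :=
  Rpower (1 + p) ((5 - 3 * g) / (2 * (g - 1))) / sqrt (1 - 3 * p).

Definition e_ode (g : R) (e : R -> R) : Prop :=
  forall p, 0 < p < 1/3 ->
    e p <> 0 /\ is_derive e p (e p * (p / ((chi g p - p) * (p + 1)))).

Definition e_init (e : R -> R) : Prop :=
  e 0 = 1 /\ filterlim e (at_right 0) (locally 1).

(* Main.v *)
Require Import Defs.
From Stdlib Require Import Reals Lra Psatz.
From Coquelicot Require Import Coquelicot.
Open Scope R_scope.

Lemma chi_gen_der c1 c2 c3 c4 x : c3 * x + c4 <> 0 ->
  is_derive (chi_gen c1 c2 c3 c4) x
   (((2*x + c1)*(c3*x+c4) - (x^2 + c1*x + c2)*c3)/(c3*x+c4)^2).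
Proof.
  intros H. unfold chi_gen. auto_derive. exact H. field. exact H.
Qed.

Lemma div_eq a b c : b <> 0 -> a / b = c -> a = c * b.
Proof. intros Hb H. rewrite <- H. field. exact Hb. Qed.

Lemma part1 (g : R) (hg : 1 < g) :
  (forall c1 c2 c3 c4 : R,
     c3 <> 0 ->
     (forall p, 0 <= p <= 1/3 -> c3 * p + c4 <> 0) ->
     chi_gen c1 c2 c3 c4 0 = 0 ->
     chi_gen c1 c2 c3 c4 (1/3) = 1/3 ->
     is_derive (chi_gen c1 c2 c3 c4) 0 g ->
     is_derive (chi_gen c1 c2 c3 c4) (1/3) (1/2) ->
     forall p, 0 <= p <= 1/3 -> chi_gen c1 c2 c3 c4 p = chi g p).
Proof.
  intros c1 c2 c3 c4 H3 HD E0 E1 D0 D1 p Hp.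
  assert (H0 : c3 * 0 + c4 <> 0) by (apply HD; lra).
  assert (H13 : c3 * (1/3) + c4 <> 0) by (apply HD; lra).
  assert (Hc4 : c4 <> 0) by (intro; apply H0; subst; ring).
  pose proof (is_derive_unique _ _ _ D0) as U0.
  pose proof (is_derive_unique _ _ _ D1) as U1.
  rewrite (is_derive_unique _ _ _ (chi_gen_der c1 c2 c3 c4 0 H0)) in U0.
  rewrite (is_derive_unique _ _ _ (chi_gen_der c1 c2 c3 c4 (1/3) H13)) in U1.
  unfold chi_gen in E0, E1.
  assert (Ec2 : c2 = 0).
  { replace c2 with ((0^2 + c1*0 + c2)/(c3*0+c4) * (c3*0+c4)) by (field; auto).
    rewrite E0; ring. }
  subst c2.
  assert (E1' : (1/3)^2 + c1*(1/3) + 0 = 1/3 * (c3*(1/3)+c4)).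
  { apply div_eq; auto. }
  assert (U0' : (2*0 + c1)*(c3*0+c4) - (0^2 + c1*0+0)*c3 = g * (c3*0+c4)^2).
  { apply div_eq; [apply pow_nonzero; auto| auto]. }
  assert (U1' : (2*(1/3) + c1)*(c3*(1/3)+c4) - ((1/3)^2 + c1*(1/3)+0)*c3
                = 1/2 * (c3*(1/3)+c4)^2).
  { apply div_eq; [apply pow_nonzero; auto| auto]. }
  assert (Ec1 : c1 = g * c4).
  { apply (Rmult_eq_reg_r c4); [|auto]. nra. }
  subst c1.
  assert (Ec3 : c3 = 3 * (g*c4 + 1)/2).
  { apply (Rmult_eq_reg_r (c3*(1/3)+c4)); [|auto]. nra. }
  assert (Eg : (g - 2) * c4 = 1/3) by (subst c3; nra).
  assert (Hg2 : g - 2 <> 0) by (intro Hx; rewrite Hx in Eg; lra).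
  assert (Ec4 : c4 = 1/(3*(g-2))).
  { replace c4 with ((g-2)*c4/(g-2)) at 1 by (field; auto). rewrite Eg. field. auto. }
  assert (HDp : 1 + 3*p*(2*g-3) <> 0) by nra.
  pose proof (HD p Hp) as Hp'.
  unfold chi_gen, chi.
  apply (Rmult_eq_reg_r ((c3*p+c4)*(1 + 3*p*(2*g-3)))).
  2: { apply Rmult_integral_contrapositive; auto. }
  field_simplify; auto.
  subst c3. rewrite Ec4. field. auto.
Qed.


Definition Zp (s t : R) : R :=
  t^3*(4+2*t) + s*t^2*(24-6*t-9*t^2) + s^2*t*(48-48*t-10*t^2+13*t^3)
  + s^3*(1-t)^2*(32-6*t^2).

Lemma Zp_pos s t : 0 < s -> 0 < t < 1 -> 0 < Zp s t.
Proof.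
  intros Hs Ht. unfold Zp.
  assert (A : 0 < t^3*(4+2*t)) by (apply Rmult_lt_0_compat; [apply pow_lt|]; lra).
  assert (B : 0 < s*t^2*(24-6*t-9*t^2)).
  { apply Rmult_lt_0_compat; [apply Rmult_lt_0_compat; [lra| apply pow_lt; lra]| nra]. }
  assert (C : 0 < s^2*t*(48-48*t-10*t^2+13*t^3)).
  { apply Rmult_lt_0_compat; [apply Rmult_lt_0_compat; [apply pow_lt; lra| lra]|].
    assert (0 < 1 - t) by lra. nra. }
  assert (Dd : 0 <= s^3*(1-t)^2*(32-6*t^2)).
  { apply Rmult_le_pos; [apply Rmult_le_pos; [apply pow_le; lra| apply pow_le; lra]| nra]. }
  lra.
Qed.

Definition Dn g p := 1 + 3*p*(2*g-3).
Definition Mn g p := g + 6*(g-2)*p + 9*(g-2)*(2*g-3)*p^2.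

Lemma chi_der g p : Dn g p <> 0 -> is_derive (chi g) p (Mn g p / (Dn g p)^2).
Proof.
  intros H. unfold chi, Dn, Mn in *. auto_derive. exact H. field. exact H.
Qed.

Lemma part2 (g : R) (hg : 1 < g) :
  (forall p, 0 < p < 1/3 ->
     0 < chi g p < 1 /\ zeta (chi g) p > 0 /\ eta (chi g) p > 0).
Proof.
  intros p Hp.
  assert (HD : 0 < Dn g p) by (unfold Dn; nra).
  assert (HDn : Dn g p <> 0) by lra.
  assert (HN : 0 < g + 3*p*(g-2)) by nra.
  assert (Hc : chi g p = p * (g + 3*p*(g-2)) / Dn g p) by reflexivity.
  split; [split|split].
  - rewrite Hc. apply Rdiv_lt_0_compat; [nra|lra].
  - rewrite Hc. apply Rmult_lt_reg_r with (Dn g p); [lra|].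
    unfold Rdiv. rewrite Rmult_assoc, Rinv_l, Rmult_1_r, Rmult_1_l; [|lra].
    assert (E : Dn g p - p * (g + 3*p*(g-2)) = (1-p)*(1-3*p) + (g-1)*p*(5-3*p))
      by (unfold Dn; ring).
    assert (0 < (1-p)*(1-3*p)) by nra.
    assert (0 < (g-1)*p*(5-3*p)) by (apply Rmult_lt_0_compat; nra).
    lra.
  - unfold zeta. rewrite (is_derive_unique _ _ _ (chi_der g p HDn)).
    assert (E : (1 + p) * (chi g p - p) * (Mn g p / Dn g p ^ 2) + 2 * chi g p * (1 - chi g p)
               = p * Zp (g-1) (1-3*p) / (3 * (Dn g p)^3)).
    { rewrite Hc. unfold Zp, Mn, Dn in *. field. exact HDn. }
    rewrite E. apply Rlt_gt. apply Rdiv_lt_0_compat.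
    + apply Rmult_lt_0_compat; [lra|]. apply Zp_pos; lra.
    + apply Rmult_lt_0_compat; [lra| apply pow_lt; lra].
  - unfold eta. rewrite Hc.
    assert (E : (2*p+1) * (p * (g + 3*p*(g-2)) / Dn g p) - p
       = p * ((g-1)*(1-p+6*p^2) + 2*p*(1-3*p)) / Dn g p) by (unfold Dn in *; field; exact HDn).
    rewrite E. apply Rlt_gt. apply Rdiv_lt_0_compat; [|lra].
    apply Rmult_lt_0_compat; [lra|].
    assert (0 < (g-1)*(1-p+6*p^2)) by (apply Rmult_lt_0_compat; nra).
    nra.
Qed.

Lemma e_der g p : -1 < p < 1/3 ->
  is_derive (e_formula g) p
   (e_formula g p * ((5 - 3 * g) / (2 * (g - 1)) / (1+p) + 3/(2*(1-3*p)))).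
Proof.
  intros Hp. unfold e_formula, Rpower.
  assert (HS0 : 0 < sqrt (1 - 3*p)) by (apply sqrt_lt_R0; lra).
  auto_derive.
  { replace (1 + - (3*p)) with (1 - 3*p) by ring. repeat split; lra. }
  replace (1 + - (3*p)) with (1 - 3*p) by ring.
  set (a := (5 - 3 * g) / (2 * (g - 1))).
  set (E := exp (a * ln (1 + p))).
  assert (HS : sqrt (1 - 3*p) * sqrt (1 - 3*p) = 1 - 3*p) by (apply sqrt_sqrt; lra).
  set (S := sqrt (1 - 3*p)) in *.
  rewrite <- HS. field. split; lra.
Qed.

Lemma K_eq g p : 1 < g -> 0 < p < 1/3 ->
  p / ((chi g p - p) * (p + 1)) =
  (5 - 3 * g) / (2 * (g - 1)) / (1+p) + 3/(2*(1-3*p)).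
Proof.
  intros hg Hp.
  assert (HD : 1 + 3*p*(2*g-3) <> 0) by nra.
  assert (E : chi g p - p = p*(g-1)*(1-3*p) / (1 + 3*p*(2*g-3)))
    by (unfold chi; field; auto).
  rewrite E. field. repeat split; try lra; nra.
Qed.

Lemma e_pos g p : -1 < p < 1/3 -> 0 < e_formula g p.
Proof.
  intros Hp. unfold e_formula, Rpower. apply Rdiv_lt_0_compat.
  apply exp_pos. apply sqrt_lt_R0; lra.
Qed.

Lemma e_ode_ok g : 1 < g -> e_ode g (e_formula g).
Proof.
  intros hg p Hp. split. pose proof (e_pos g p). lra.
  rewrite K_eq; auto. apply e_der. lra.
Qed.

Lemma e_zero g : e_formula g 0 = 1.
Proof.
  unfold e_formula, Rpower. replace (1+0) with 1 by ring. replace (1 - 3*0) with 1 by ring.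
  rewrite ln_1, Rmult_0_r, exp_0, sqrt_1. field.
Qed.

Lemma at_right_le x : filter_le (at_right x) (locally x).
Proof.
  intros P [d Hd]. exists d. intros y Hy _. apply Hd. exact Hy.
Qed.

Lemma cont_at g (c : R) p : -1 < p < 1/3 ->
  filterlim (fun x => c * e_formula g x) (locally p) (locally (c * e_formula g p)).
Proof.
  intros Hp. apply (ex_derive_continuous (fun x => c * e_formula g x)).
  eexists. apply is_derive_scal. apply e_der. exact Hp.
Qed.

Lemma e_init_ok g : e_init (e_formula g).
Proof.
  split. apply e_zero.
  eapply filterlim_filter_le_1. apply at_right_le.
  replace (locally 1) with (locally (e_formula g 0)) by (rewrite e_zero; reflexivity).
  apply (ex_derive_continuous (e_formula g)).
  eexists. apply e_der. lra.
Qed.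

Lemma e_unique g : 1 < g -> forall e : R -> R, e_ode g e -> e_init e ->
      forall p, 0 <= p < 1/3 -> e p = e_formula g p.
Proof.
  intros hg e Hode [Hi0 Hil] p Hp.
  set (h := fun x => e x / e_formula g x).
  assert (Hh : forall x, 0 < x < 1/3 -> is_derive h x 0).
  { intros x Hx. destruct (Hode x Hx) as [_ Hd].
    rewrite K_eq in Hd; auto.
    pose proof (e_der g x ltac:(lra)) as Hf.
    pose proof (e_pos g x ltac:(lra)) as Hpos.
    replace 0 with ((e x * ((5 - 3 * g) / (2 * (g - 1)) / (1 + x) + 3 / (2 * (1 - 3 * x)))
       * e_formula g x - e x * (e_formula g x * ((5 - 3 * g) / (2 * (g - 1)) / (1 + x) + 3 / (2 * (1 - 3 * x))))) / e_formula g x ^ 2).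
    apply is_derive_div; auto. lra.
    field. lra. }
  assert (Hc : forall x y, 0 < x < 1/3 -> 0 < y < 1/3 -> h x = h y).
  { intros x y Hx Hy.
    destruct (MVT_gen h x y (fun _ => 0)) as [z [_ Hz]].
    - intros z Hz. apply Hh. split.
      + apply Rlt_le_trans with (Rmin x y); [apply Rmin_glb_lt; lra| lra].
      + apply Rlt_le_trans with (Rmax x y); [lra| apply Rmax_lub; lra].
    - intros z Hz. apply continuity_pt_filterlim.
      apply (ex_derive_continuous h). eexists. apply Hh. split.
      + apply Rlt_le_trans with (Rmin x y); [apply Rmin_glb_lt; lra| lra].
      + apply Rle_lt_trans with (Rmax x y); [lra| apply Rmax_lub_lt; lra].
    - lra. }
  set (c := h (1/6)).
  assert (Hec : forall x, 0 < x < 1/3 -> e x = c * e_formula g x).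
  { intros x Hx. pose proof (e_pos g x ltac:(lra)).
    replace (e x) with (h x * e_formula g x) by (unfold h; field; lra).
    rewrite (Hc x (1/6)); auto. lra. }
  assert (Hl2 : filterlim e (at_right 0) (locally (c * 1))).
  { apply filterlim_ext_loc with (fun x => c * e_formula g x).
    - exists (mkposreal (1/3) ltac:(lra)). intros y Hy Hy0.
      change (Rabs (y - 0) < 1/3) in Hy. simpl in Hy0.
      apply Rabs_lt_between in Hy.
      symmetry. apply Hec. lra.
    - eapply filterlim_filter_le_1. apply at_right_le.
      replace (locally (c*1)) with (locally (c * e_formula g 0)) by (rewrite e_zero; reflexivity). apply cont_at. lra. }
  assert (c1 : c * 1 = 1).
  { apply (@filterlim_locally_unique R R_AbsRing R_NormedModule (at_right 0)
      (Proper_StrongProper _ (at_right_proper_filter 0)) e); [exact Hl2| exact Hil]. }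
  destruct (Req_dec p 0) as [->|Hp0].
  - rewrite Hi0, e_zero. reflexivity.
  - assert (0 < p) by (destruct Hp as [Hp1 _]; destruct Hp1; [lra| congruence]).
    rewrite Hec by lra. replace c with 1 by lra. ring.
Qed.

Lemma e_identity g : 1 < g -> forall p, 0 <= p < 1/3 ->
      (e_formula g p) ^ 2 * (1 - 3 * p) = Rpower (1 + p) ((5 - 3 * g) / (g - 1)).
Proof.
  intros hg p Hp. unfold e_formula.
  replace ((5 - 3 * g) / (g - 1)) with ((5 - 3 * g) / (2*(g - 1)) + (5 - 3 * g) / (2*(g - 1)))
    by (field; lra).
  rewrite Rpower_plus.
  assert (HS : sqrt (1 - 3*p) * sqrt (1 - 3*p) = 1 - 3*p) by (apply sqrt_sqrt; lra).
  assert (HS0 : 0 < sqrt (1 - 3*p)) by (apply sqrt_lt_R0; lra).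
  set (S := sqrt (1 - 3*p)) in *. rewrite <- HS. field. lra.
Qed.

Lemma taub g : 1 < g ->
  ((forall p, 0 < p < 1/3 -> (e_formula g p) ^ 2 * (1 - 3 * p) >= 1) <-> g <= 5/3).
Proof.
  intros hg. split.
  - intros H. destruct (Rle_lt_dec g (5/3)) as [|Hlt]; auto. exfalso.
    specialize (H (1/6) ltac:(lra)). rewrite e_identity in H by lra.
    assert (Hb : (5 - 3 * g) / (g - 1) < 0).
    { apply Rdiv_neg_pos; lra. }
    pose proof (Rpower_lt (1 + 1/6) _ _ ltac:(lra) Hb).
    rewrite Rpower_O in H0 by lra. lra.
  - intros H p Hp. rewrite e_identity by lra.
    assert (Hb : 0 <= (5 - 3 * g) / (g - 1)) by (apply Rdiv_le_0_compat; lra).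
    pose proof (Rle_Rpower (1+p) 0 _ ltac:(lra) Hb) as H1.
    rewrite Rpower_O in H1 by lra. lra.
Qed.

Theorem mainTheorem4 (g : R) (hg : 1 < g) :
  (* 1. determination of chi among the rational candidates *)
  (forall c1 c2 c3 c4 : R,
     c3 <> 0 ->
     (forall p, 0 <= p <= 1/3 -> c3 * p + c4 <> 0) ->
     chi_gen c1 c2 c3 c4 0 = 0 ->
     chi_gen c1 c2 c3 c4 (1/3) = 1/3 ->
     is_derive (chi_gen c1 c2 c3 c4) 0 g ->
     is_derive (chi_gen c1 c2 c3 c4) (1/3) (1/2) ->
     forall p, 0 <= p <= 1/3 -> chi_gen c1 c2 c3 c4 p = chi g p) /\
  (* 2. compressibility inequalities *)
  (forall p, 0 < p < 1/3 ->
     0 < chi g p < 1 /\ zeta (chi g) p > 0 /\ eta (chi g) p > 0) /\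
  (* 3. the energy function e: existence, uniqueness, and the identity *)
  (e_ode g (e_formula g) /\ e_init (e_formula g) /\
   (forall e : R -> R, e_ode g e -> e_init e ->
      forall p, 0 <= p < 1/3 -> e p = e_formula g p) /\
   (forall p, 0 <= p < 1/3 ->
      (e_formula g p) ^ 2 * (1 - 3 * p) = Rpower (1 + p) ((5 - 3 * g) / (g - 1)))) /\
  (* 4. Taub inequality *)
  ((forall p, 0 < p < 1/3 -> (e_formula g p) ^ 2 * (1 - 3 * p) >= 1) <-> g <= 5/3).
Proof.
  split; [apply part1; exact hg|].
  split; [apply part2; exact hg|].
  split; [|apply taub; exact hg].
  split; [apply e_ode_ok; exact hg|].
  split; [apply e_init_ok|].
  split; [apply e_unique; exact hg| apply e_identity; exact hg].
Qed.
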